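(* Let $E$ be a row-finite graph and $k$ a field. Let $K:\mathbb Z^R\to\mathbb Z^R\oplus\mathbb Z^S$ be $K(x)=((B_E^t-I)x,\,C_E^tx)$ and let $\psi:\mathbb Z^R\oplus\mathbb Z^S=\mathbb Z^{E^0}\to K_0^{\mathrm{gr}}(L_k(E))$ be $\psi(\sum_v n_v\mathbf e_v)=\sum_v n_v v(0)$. Then $\phi\circ\psi|_{\mathbb Z^R}=\psi\circ K$, the restriction of $\psi$ is an isomorphism from $\operatorname{Ker}K$ onto $\operatorname{Ker}\phi$, and $\psi$ induces an isomorphism $\overline\psi:\operatorname{Coker}K\to\operatorname{Coker}\phi$, where $\phi:K_0^{\mathrm{gr}}(L_k(E))\to K_0^{\mathrm{gr}}(L_k(E))$ is the homomorphism with $\phi(v(i))=v(i+1)-v(i)$.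
   Context: $E=(E^0,E^1,r,s)$ is a row-finite directed graph (each vertex emits finitely many edges); $S$ is its set of sinks and $R=E^0\setminus S$. The adjacency matrix $A_E$ has $A_E(v,w)=|\{e:s(e)=v,r(e)=w\}|$; listing $R$ before $S$, $A_E=\begin{pmatrix}B_E&C_E\\0&0\end{pmatrix}$ with $B_E$ the $R\times R$ and $C_E$ the $R\times S$ block. For a set $X$, $\mathbb Z^X$ denotes the direct sum $\bigoplus_X\mathbb Z$ with basis $\mathbf e_v$. $L_k(E)$ is the Leavitt path algebra (generated by $E^0\cup E^1\cup\{e^*\}$ with relations $vw=\delta_{v,w}v$, $s(e)e=e=er(e)$, $r(e)e^*=e^*=e^*s(e)$, $e^*f=\delta_{e,f}r(e)$, $v=\sum_{s(e)=v}ee^*$ for non-sinks), $\mathbb Z$-graded by $\deg e=1,\deg e^*=-1$. $K_0^{\mathrm{gr}}(L_k(E))$ is identified with the group completion of the monoid generated by $v(i)$ ($v\in E^0$, $i\in\mathbb Z$) with relations $v(i)=\sum_{e\in s^{-1}(v)}r(e)(i-1)$ for non-sinks $v$, where $v(i)$ corresponds to the class of the graded module $L_k(E)v(-i)$. *)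

(* Defs.v *)
From mathcomp Require Import all_boot all_order all_algebra.
Set Implicit Arguments. Unset Strict Implicit. Unset Printing Implicit Defensive.
Import GRing.Theory Num.Theory.
Local Open Scope ring_scope.

(* Row-finite graph E = (V, Ed, src, rng) is given in the theorem together with
   out : V -> seq Ed, a duplicate-free enumeration of the (finitely many)
   edges with source v.  Elements of the free abelian group Z^X (direct sum)
   are represented by formal sums l : seq (X * int), the element
   sum_{(x,n) in l} n e_x; two formal sums denote the same element iff they
   have the same coefficient function [coef]. *)

Definition coef (X : eqType) (l : seq (X * int)) (x : X) : int :=
  \sum_(p <- l | p.1 == x) p.2.

Definition fscale (X : eqType) (n : int) (l : seq (X * int)) : seq (X * int) :=
  [seq (p.1, n * p.2) | p <- l].

Definition nonsink (V Ed : eqType) (out : V -> seq Ed) (v : V) : bool :=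
  out v != [::].

(* a formal sum supported on R, i.e. an element of Z^R *)
Definition onR (V Ed : eqType) (out : V -> seq Ed) (l : seq (V * int)) : bool :=
  all (fun p => nonsink out p.1) l.

(* K(x) = ((B^t - I) x, C^t x): K(e_v) = sum_{s(e)=v} e_{r(e)} - e_v, v in R *)
Definition Kmap (V Ed : eqType) (rng : Ed -> V) (out : V -> seq Ed)
  (l : seq (V * int)) : seq (V * int) :=
  flatten [seq [seq (rng e, p.2) | e <- out p.1] ++ [:: (p.1, - p.2)] | p <- l].

(* Formal sums over the generators v(i), (v,i) in V x Z. *)
Definition psi (V : eqType) (l : seq (V * int)) : seq ((V * int) * int) :=
  [seq ((p.1, 0%R), p.2) | p <- l].

Definition phi (V : eqType) (L : seq ((V * int) * int)) : seq ((V * int) * int) :=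
  flatten [seq [:: ((p.1.1, p.1.2 + 1), p.2); (p.1, - p.2)] | p <- L].

Definition relation (V Ed : eqType) (rng : Ed -> V) (out : V -> seq Ed)
  (v : V) (i : int) : seq ((V * int) * int) :=
  ((v, i), 1) :: [seq ((rng e, i - 1), -1) | e <- out v].

Definition relcomb (V Ed : eqType) (rng : Ed -> V) (out : V -> seq Ed)
  (rl : seq ((V * int) * int)) : seq ((V * int) * int) :=
  flatten [seq fscale p.2 (relation rng out p.1.1 p.1.2) | p <- rl].

(* K_0^gr(L_k(E)) = abelian group generated by the v(i) subject to the
   relations above; two formal sums represent the same element iff their
   difference is an integer combination of relations. *)
Definition K0eq (V Ed : eqType) (rng : Ed -> V) (out : V -> seq Ed)
  (L1 L2 : seq ((V * int) * int)) : Prop :=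
  exists rl : seq ((V * int) * int),
    all (fun p => nonsink out p.1.1) rl /\
    forall x, coef L1 x - coef L2 x = coef (relcomb rng out rl) x.

(* Main.v *)
Require Import Defs.
From mathcomp Require Import all_boot all_order all_algebra zify ring.
Import GRing.Theory Num.Theory.
Local Open Scope ring_scope.
Set Implicit Arguments. Unset Strict Implicit. Unset Printing Implicit Defensive.

Definition lin {X : Type} (l : seq (X * int)) (h : X -> int) : int :=
  \sum_(p <- l) p.2 * h p.1.

Lemma lin_nil (X : Type) (h : X -> int) : lin [::] h = 0.
Proof. by rewrite /lin big_nil. Qed.

Lemma lin_cons (X : Type) (p : X * int) l h : lin (p :: l) h = p.2 * h p.1 + lin l h.
Proof. by rewrite /lin big_cons. Qed.

Lemma lin_cat (X : Type) (l1 l2 : seq (X * int)) h : lin (l1 ++ l2) h = lin l1 h + lin l2 h.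
Proof. by rewrite /lin big_cat. Qed.

Lemma lin_flatten (X I : Type) (F : I -> seq (X * int)) s h :
  lin (flatten [seq F i | i <- s]) h = \sum_(i <- s) lin (F i) h.
Proof. by rewrite /lin big_flatten big_map. Qed.

Lemma lin_ext (X : Type) (l : seq (X * int)) f g : (forall x, f x = g x) -> lin l f = lin l g.
Proof. by move=> E; apply: eq_bigr => p _; rewrite E. Qed.

Lemma lin_ext_in (X : eqType) (l : seq (X * int)) f g :
  (forall p, p \in l -> f p.1 = g p.1) -> lin l f = lin l g.
Proof. by move=> E; apply: eq_big_seq => p pl; rewrite E. Qed.

Lemma lin_sub (X : Type) (l : seq (X * int)) f g :
  lin l f - lin l g = lin l (fun x => f x - g x).
Proof. by rewrite /lin -sumrB; apply: eq_bigr => p _; rewrite mulrBr. Qed.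

Lemma lin_add (X : Type) (l : seq (X * int)) f g :
  lin l f + lin l g = lin l (fun x => f x + g x).
Proof. by rewrite /lin -big_split; apply: eq_bigr => p _; rewrite mulrDr. Qed.

Lemma lin_fscale (X : eqType) n (l : seq (X * int)) h : lin (fscale n l) h = n * lin l h.
Proof. by rewrite /lin /fscale big_map mulr_sumr; apply: eq_bigr => p _; rewrite mulrA. Qed.

Lemma lin_mapk (X Y : Type) (f : X -> Y) (l : seq (X * int)) h :
  lin [seq (f p.1, p.2) | p <- l] h = lin l (fun x => h (f x)).
Proof. by rewrite /lin big_map. Qed.

Lemma lin_mapkn (X Y : Type) (f : X -> Y) (l : seq (X * int)) h :
  lin [seq (f p.1, - p.2) | p <- l] h = - lin l (fun x => h (f x)).
Proof. by rewrite /lin big_map -sumrN; apply: eq_bigr => p _; rewrite mulNr. Qed.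

Definition ind {X : eqType} (x : X) (y : X) : int := if y == x then 1 else 0.

Lemma coef_lin (X : eqType) (l : seq (X * int)) x : coef l x = lin l (ind x).
Proof.
rewrite /coef /lin big_mkcond; apply: eq_bigr => p _.
by rewrite /ind; case: eqP => _; rewrite ?mulr1 ?mulr0.
Qed.

Lemma lin_coef0 (X : eqType) (l : seq (X * int)) :
  (forall x, coef l x = 0) -> forall h, lin l h = 0.
Proof.
move=> H h; set S := undup (map fst l).
have E : lin l h = \sum_(p <- l) \sum_(g <- S) p.2 * (if p.1 == g then h g else 0).
  apply: eq_big_seq => p pl; rewrite -mulr_sumr; congr (_ * _).
  have pS : p.1 \in S by rewrite mem_undup; apply/mapP; exists p.
  rewrite (bigD1_seq p.1) ?undup_uniq //= eqxx big1 ?addr0 //.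
  by move=> g /negbTE; rewrite eq_sym => ->.
rewrite E exchange_big /=; apply: big1 => g _.
transitivity (coef l g * h g); last by rewrite H mul0r.
rewrite /coef mulr_suml [RHS]big_mkcond /=.
apply: eq_bigr => p _.
by case: eqP => _; rewrite ?mulr0 ?mul0r.
Qed.

Lemma lin_eq0 (X : eqType) (l : seq (X * int)) :
  (forall x, lin l (ind x) = 0) -> forall h, lin l h = 0.
Proof. by move=> H; apply: lin_coef0 => x; rewrite coef_lin. Qed.

Definition rho (V Ed : eqType) (rng : Ed -> V) (out : V -> seq Ed) (h : V * int -> int)
  (g : V * int) : int := h g - \sum_(e <- out g.1) h (rng e, g.2 - 1).

Definition Dl (V : Type) (h : V * int -> int) (g : V * int) : int := h (g.1, g.2 + 1) - h g.

Lemma lin_psi (V : eqType) (l : seq (V * int)) h : lin (psi l) h = lin l (fun v => h (v, 0)).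
Proof. by rewrite /psi /lin big_map. Qed.

Lemma lin_phi (V : eqType) (L : seq ((V * int) * int)) h : lin (phi L) h = lin L (Dl h).
Proof.
rewrite /phi lin_flatten /lin; apply: eq_bigr => p _.
by rewrite big_cons big_cons big_nil /= addr0 /Dl mulrBr mulNr.
Qed.

Lemma lin_relcomb (V Ed : eqType) (rng : Ed -> V) (out : V -> seq Ed) rl h :
  lin (relcomb rng out rl) h = lin rl (rho rng out h).
Proof.
rewrite /relcomb lin_flatten [RHS]/lin; apply: eq_bigr => p _.
rewrite lin_fscale /relation lin_cons /lin big_map /= mul1r /rho; congr (_ * (_ + _)).
  by case: p => -[].
by rewrite -sumrN; apply: eq_bigr => e _; rewrite mulN1r.
Qed.

Lemma lin_Kmap (V Ed : eqType) (rng : Ed -> V) (out : V -> seq Ed) l h :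
  lin (Kmap rng out l) h = lin l (fun v => \sum_(e <- out v) h (rng e) - h v).
Proof.
rewrite /Kmap lin_flatten /lin; apply: eq_bigr => p _.
rewrite big_cat big_map big_cons big_nil /= addr0 mulrBr mulNr mulr_sumr //.
Qed.

Lemma K0eq_lin (V Ed : eqType) (rng : Ed -> V) (out : V -> seq Ed) L1 L2 :
  K0eq rng out L1 L2 <-> exists rl, all (fun p => nonsink out p.1.1) rl /\
     forall h, lin L1 h - lin L2 h = lin rl (rho rng out h).
Proof.
split=> -[rl [Hn H]]; exists rl; split=> //.
  move=> h.
  set Z := L1 ++ fscale (-1) L2 ++ fscale (-1) (relcomb rng out rl).
  have LZ : forall f, lin Z f = lin L1 f - lin L2 f - lin (relcomb rng out rl) f.
    by move=> f; rewrite /Z !lin_cat !lin_fscale !mulN1r addrA.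
  have Z0 : forall f, lin Z f = 0.
    by apply: lin_eq0 => x; rewrite LZ -!coef_lin H subrr.
  by move/eqP: (Z0 h); rewrite LZ subr_eq0 lin_relcomb => /eqP.
by move=> x; rewrite !coef_lin H lin_relcomb.
Qed.

Lemma lin_zero (X : Type) (l : seq (X * int)) : lin l (fun _ => 0) = 0.
Proof. by rewrite /lin big1 // => p _; rewrite mulr0. Qed.

Lemma lin_opp (X : Type) (l : seq (X * int)) f : - lin l f = lin l (fun x => - f x).
Proof. by rewrite /lin -sumrN; apply: eq_bigr => p _; rewrite mulrN. Qed.

Lemma rhoDl (V Ed : eqType) (rng : Ed -> V) (out : V -> seq Ed) h g :
  rho rng out (Dl h) g = Dl (rho rng out h) g.
Proof.
case: g => v i; rewrite /rho /Dl /=.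
have -> : i - 1 + 1 = i by ring.
have -> : i + 1 - 1 = i by ring.
rewrite sumrB; ring.
Qed.

Lemma part1 (V Ed : eqType) (rng : Ed -> V) (out : V -> seq Ed) L1 L2 :
  K0eq rng out L1 L2 -> K0eq rng out (phi L1) (phi L2).
Proof.
move/K0eq_lin=> [rl [Hn H]]; apply/K0eq_lin; exists (phi rl); split.
  apply/allP => q /flattenP [s /mapP [p pin ->]].
  by rewrite !inE => /orP [/eqP -> | /eqP ->] /=; exact: (allP Hn p pin).
move=> h; rewrite !lin_phi H; apply: lin_ext => g; exact: rhoDl.
Qed.

Lemma part2_lin (V Ed : eqType) (rng : Ed -> V) (out : V -> seq Ed) x h :
  lin (phi (psi x)) h - lin (psi (Kmap rng out x)) h =
  lin [seq ((p.1, 1%:Z), p.2) | p <- x] (rho rng out h).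
Proof.
rewrite lin_phi !lin_psi lin_Kmap lin_sub (lin_mapk (fun v => (v, 1%:Z))).
apply: lin_ext => v; rewrite /rho /Dl /= add0r subrr; ring.
Qed.

Lemma part2_nonsink (V Ed : eqType) (out : V -> seq Ed) x :
  onR out x -> all (fun p => nonsink out p.1.1) [seq ((p.1, 1%:Z), p.2) | p <- x].
Proof. by move=> Hx; apply/allP => q /mapP [p pin ->] /=; exact: (allP Hx p pin). Qed.

Lemma part2 (V Ed : eqType) (rng : Ed -> V) (out : V -> seq Ed) x :
  onR out x -> K0eq rng out (phi (psi x)) (psi (Kmap rng out x)).
Proof.
move=> Hx; apply/K0eq_lin; exists [seq ((p.1, 1%:Z), p.2) | p <- x]; split.
  exact: part2_nonsink.
by move=> h; rewrite part2_lin.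
Qed.

Lemma part3a (V Ed : eqType) (rng : Ed -> V) (out : V -> seq Ed) x :
  onR out x -> (forall w, coef (Kmap rng out x) w = 0) ->
  K0eq rng out (phi (psi x)) [::].
Proof.
move=> Hx HK; apply/K0eq_lin; exists [seq ((p.1, 1%:Z), p.2) | p <- x]; split.
  exact: part2_nonsink.
move=> h; rewrite -part2_lin lin_nil; congr (_ - _).
by rewrite lin_psi (lin_coef0 HK).
Qed.

Fixpoint paths (V Ed : eqType) (rng : Ed -> V) (out : V -> seq Ed) (n : nat) (v w : V) : int :=
  if n is n'.+1 then \sum_(e <- out v) paths rng out n' (rng e) w else ind w v.

Lemma kerK_paths (V Ed : eqType) (rng : Ed -> V) (out : V -> seq Ed) x :
  (forall w, coef (Kmap rng out x) w = 0) ->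
  forall n w, lin x (fun v => paths rng out n v w) = coef x w.
Proof.
move=> HK; elim=> [|n IH] w; first by rewrite coef_lin.
rewrite -IH; apply/eqP; rewrite -subr_eq0 lin_sub; apply/eqP.
by have := lin_coef0 HK (fun v => paths rng out n v w); rewrite lin_Kmap.
Qed.

Lemma absz_bound (T : eqType) (l : seq ((T * int) * int)) p :
  p \in l -> (`|p.1.2| <= \sum_(q <- l) `|q.1.2|)%N.
Proof.
elim: l => [|q l IH] //; rewrite in_cons big_cons => /orP [/eqP -> | /IH]. - by rewrite leq_addr.
- by move=> h; apply: leq_trans h (leq_addl _ _).
Qed.

Lemma part3b (V Ed : eqType) (rng : Ed -> V) (out : V -> seq Ed) x y :
  (forall w, coef (Kmap rng out x) w = 0) ->
  (forall w, coef (Kmap rng out y) w = 0) ->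
  K0eq rng out (psi x) (psi y) -> forall w, coef x w = coef y w.
Proof.
move=> Kx Ky /K0eq_lin [rl [_ H]] w.
set N := (\sum_(q <- rl) `|q.1.2|).+1.
have HN : forall p, p \in rl -> (`|p.1.2| < N)%N by move=> p /absz_bound; rewrite /N ltnS.
clearbody N.
have := H (fun g => paths rng out (absz (N%:Z + g.2)) g.1 w).
rewrite (@lin_ext_in _ rl _ (fun _ => 0)); last first.
  move=> p pin; have := HN p pin.
  case: p pin => [[v i] c] pin /= Hb.
  rewrite /rho /=.
  have -> : absz (N%:Z + i) = (absz (N%:Z + (i - 1))).+1 by lia.
  by rewrite /= subrr.
rewrite lin_zero !lin_psi !(lin_ext _ (g := fun v => paths rng out N v w)) ?(kerK_paths Kx) ?(kerK_paths Ky).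
- by move/eqP; rewrite subr_eq0 => /eqP.
- by move=> v /=; rewrite addn0.
- by move=> v /=; rewrite addn0.
Qed.

Lemma sum_shift (f : nat -> int) n :
  \sum_(0 <= k < n) f k.+1 = \sum_(0 <= k < n) f k + f n - f 0%N.
Proof.
have A : \sum_(0 <= k < n.+1) f k = f 0%N + \sum_(0 <= k < n) f k.+1 by rewrite big_nat_recl.
have B : \sum_(0 <= k < n.+1) f k = \sum_(0 <= k < n) f k + f n by rewrite big_nat_recr.
rewrite B in A; rewrite A; ring.
Qed.

Lemma D_inj (V : eqType) (Z : seq ((V * int) * int)) :
  (forall h, lin Z (Dl h) = 0) -> forall h, lin Z h = 0.
Proof.
move=> H h.
set N := (\sum_(q <- Z) `|q.1.2|)%N.
have HN : forall p, p \in Z -> (`|p.1.2| <= N)%N by move=> p /absz_bound.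
clearbody N.
pose hB := fun g : V * int => if g.2 <= N%:Z then h g else 0.
pose h' := fun g : V * int => - \sum_(0 <= k < (N + N).+1) hB (g.1, g.2 + k%:Z).
rewrite -(H h'); apply: lin_ext_in => p pin.
have := HN p pin; case: p pin => [[v i] c] pin /= Hb.
rewrite /Dl /h' /=.
have E : \sum_(0 <= k < (N + N).+1) hB (v, i + 1 + k%:Z) =
         \sum_(0 <= k < (N + N).+1) (fun k => hB (v, i + k%:Z)) k.+1.
  by apply: eq_bigr => k _ /=; congr (hB (_, _)); lia.
rewrite E (sum_shift (fun k => hB (v, i + k%:Z))) /=.
have -> : hB (v, i + 0%:Z) = h (v, i).
  rewrite /hB /= ifT; first by congr h; congr pair; lia.
  lia.
have -> : hB (v, i + (N + N).+1%:Z) = 0.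
  rewrite /hB /= ifF //; lia.
ring.
Qed.

Definition tel (V : eqType) (p : (V * int) * int) : seq ((V * int) * int) :=
  match p.1.2 with
  | Posz n => [seq ((p.1.1, k%:Z), p.2) | k <- index_iota 0 n]
  | Negz n => [seq ((p.1.1, Negz k), - p.2) | k <- index_iota 0 n.+1]
  end.

Lemma lin_tel (V : eqType) (p : (V * int) * int) f :
  lin (tel p) (Dl f) = p.2 * (f p.1 - f (p.1.1, 0)).
Proof.
case: p => [[v [n|n]] c]; rewrite /tel /lin big_map /= -mulr_sumr.
  congr (_ * _).
  rewrite (telescope_sumr_eq (fun k => f (v, k%:Z))) //.
  by move=> k _; rewrite /Dl /=; congr (f (_, _) - _); lia.
rewrite mulNr -mulrN; congr (_ * _).
rewrite -sumrN (telescope_sumr_eq (fun k => f (v, - k%:Z))) //.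
by move=> k _; rewrite /Dl /= opprB; congr (f (_, _) - f (_, _)); lia.
Qed.

Lemma tel_key (V : eqType) (p : (V * int) * int) : all (fun q => q.1.1 == p.1.1) (tel p).
Proof.
by case: p => [[v [n|n]] c]; rewrite /tel /= ?eqxx ?all_map; apply/allP => k _ /=.
Qed.

Lemma all_flatten_map (I X : Type) (P : pred X) (F : I -> seq X) s :
  all P (flatten [seq F i | i <- s]) = all (fun i => all P (F i)) s.
Proof. by elim: s => //= a s IH; rewrite all_cat IH. Qed.

Lemma lin_telall (V : eqType) (rl : seq ((V * int) * int)) f :
  lin (flatten [seq tel p | p <- rl]) (Dl f) = lin rl f - lin rl (fun g => f (g.1, 0)).
Proof.
by rewrite lin_flatten lin_sub [RHS]/lin; apply: eq_bigr => p _; rewrite lin_tel.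
Qed.

Lemma tel_nonsink (V Ed : eqType) (out : V -> seq Ed) rl :
  all (fun p => nonsink out p.1.1) rl ->
  all (fun p => nonsink out p.1.1) (flatten [seq tel p | p <- rl]).
Proof.
move=> Hn; rewrite all_flatten_map; apply/allP => p pin; apply/allP => q qin.
by have /eqP -> := allP (tel_key p) q qin; exact: (allP Hn p pin).
Qed.

Lemma all_fscale (V Ed : eqType) (out : V -> seq Ed) n (l : seq ((V * int) * int)) :
  all (fun p => nonsink out p.1.1) (fscale n l) = all (fun p => nonsink out p.1.1) l.
Proof. by rewrite /fscale all_map. Qed.

Lemma fin4 (a b c d : int) : a - b - c + d = 0 -> a - b = c + -1 * d.
Proof. move=> E; rewrite mulN1r; apply/eqP; rewrite -subr_eq0; apply/eqP; rewrite -E; ring. Qed.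

Lemma lin_of_coef (X : eqType) (A B C : seq (X * int)) :
  (forall w, coef A w = coef B w + coef C w) -> forall f, lin A f = lin B f + lin C f.
Proof.
move=> H f.
set Z := A ++ fscale (-1) B ++ fscale (-1) C.
have LZ : forall g, lin Z g = lin A g - lin B g - lin C g.
  by move=> g; rewrite /Z !lin_cat !lin_fscale; ring.
have Z0 : forall g, lin Z g = 0 by apply: lin_eq0 => w; rewrite LZ -!coef_lin H; ring.
by apply/eqP; rewrite -subr_eq0; apply/eqP; rewrite -(Z0 f) LZ; ring.
Qed.

Lemma part3c (V Ed : eqType) (rng : Ed -> V) (out : V -> seq Ed) L :
  K0eq rng out (phi L) [::] ->
  exists x, [/\ onR out x, (forall w, coef (Kmap rng out x) w = 0) &
                K0eq rng out (psi x) L].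
Proof.
move/K0eq_lin => [rl [Hn H]].
have H' : forall h, lin L (Dl h) = lin rl (rho rng out h).
  by move=> h; rewrite -H lin_phi lin_nil subr0.
set x := [seq (p.1.1, p.2) | p <- rl].
have Lx : forall f, lin x f = lin rl (fun g => f g.1) by move=> f; rewrite lin_mapk.
have Kx : forall w, coef (Kmap rng out x) w = 0.
  move=> w; rewrite coef_lin lin_Kmap Lx.
  have E := H' (fun g => ind w g.1).
  rewrite (lin_ext _ (g := fun _ => 0)) in E; last by move=> g; rewrite /Dl /= subrr.
  rewrite lin_zero in E.
  rewrite -[LHS]opprK lin_opp (lin_ext _ (g := rho rng out (fun g => ind w g.1))).
    by rewrite -E oppr0.
  by move=> g; rewrite /rho opprB.
exists x; split => //.
  by rewrite /onR /x all_map; apply/allP => p pin /=; exact: (allP Hn p pin).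
set Q := flatten [seq tel p | p <- rl].
apply/K0eq_lin; exists (psi x ++ fscale (-1) Q); split.
  rewrite all_cat all_fscale tel_nonsink // andbT.
  by rewrite /psi /x -map_comp all_map; apply/allP => p pin /=; exact: (allP Hn p pin).
move=> h.
set Z := psi x ++ fscale (-1) L ++ fscale (-1) (relcomb rng out (psi x)) ++ relcomb rng out Q.
have LZ : forall f, lin Z f = lin (psi x) f - lin L f - lin (psi x) (rho rng out f)
                               + lin Q (rho rng out f).
  by move=> f; rewrite /Z !lin_cat !lin_fscale !lin_relcomb; ring.
have Z0 : forall f, lin Z (Dl f) = 0.
  move=> f; rewrite LZ H'.
  have LQ : lin Q (rho rng out (Dl f)) =
            lin rl (rho rng out f) - lin rl (fun g => rho rng out f (g.1, 0)).
    by rewrite (lin_ext _ (g := Dl (rho rng out f))) ?lin_telall // => g; exact: rhoDl.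
  rewrite LQ !lin_psi !Lx.
  have five : forall a b c d : int, a - b - c + (b - d) = a - c - d by move=> *; ring.
  rewrite five !lin_sub.
  rewrite (lin_ext _ (g := fun g => \sum_(e <- out g.1) f (rng e, 0) - f (g.1, 0))).
    by rewrite -(Lx (fun v => \sum_(e <- out v) f (rng e, 0) - f (v, 0))) -lin_Kmap (lin_coef0 Kx).
  move=> [v i]; rewrite /rho /Dl /=.
  have -> : (0 : int) - 1 + 1 = 0 by [].
  rewrite sumrB; ring.
have := D_inj Z0 h; rewrite LZ => /fin4 ->.
by rewrite lin_cat lin_fscale.
Qed.

Lemma part4 (V Ed : eqType) (rng : Ed -> V) (out : V -> seq Ed) x y z :
  onR out z ->
  (forall w, coef x w = coef y w + coef (Kmap rng out z) w) ->
  exists L', K0eq rng out (psi x) (psi y ++ phi L').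
Proof.
move=> Hz Hc; exists (psi z); apply/K0eq_lin.
exists (fscale (-1) [seq ((p.1, 1%:Z), p.2) | p <- z]); split.
  by rewrite all_fscale; exact: part2_nonsink.
move=> h; rewrite lin_fscale -part2_lin lin_cat !lin_psi (lin_of_coef Hc) -lin_psi.
ring.
Qed.

Lemma part5 (V Ed : eqType) (rng : Ed -> V) (out : V -> seq Ed) x y L' :
  K0eq rng out (psi x) (psi y ++ phi L') ->
  exists z, onR out z /\ forall w, coef x w = coef y w + coef (Kmap rng out z) w.
Proof.
move/K0eq_lin => [rl [Hn H]].
exists [seq (p.1.1, - p.2) | p <- rl]; split.
  by rewrite /onR all_map; apply/allP => p pin /=; exact: (allP Hn p pin).
move=> w; have := H (fun g => ind w g.1).
rewrite lin_cat lin_phi (lin_ext L' (g := fun _ => 0)); last by move=> g; rewrite /Dl /= subrr.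
rewrite lin_zero addr0 !lin_psi /= -!coef_lin => E.
rewrite [coef (Kmap _ _ _) _]coef_lin lin_Kmap lin_mapkn lin_opp.
rewrite (lin_ext _ (g := rho rng out (fun g => ind w g.1))); last first.
  by move=> g; rewrite /rho opprB.
by rewrite -E; ring.
Qed.

Lemma part6 (V Ed : eqType) (rng : Ed -> V) (out : V -> seq Ed) L :
  exists x L', K0eq rng out L (psi x ++ phi L').
Proof.
exists [seq (p.1.1, p.2) | p <- L], (flatten [seq tel p | p <- L]).
apply/K0eq_lin; exists [::]; split => // h.
rewrite lin_cat lin_phi lin_telall lin_psi lin_mapk lin_nil; ring.
Qed.

Unset Implicit Arguments.
Theorem proposition4p4 (V Ed : eqType) (src rng : Ed -> V) (out : V -> seq Ed)
  (Huniq : forall v, uniq (out v))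
  (Hout : forall v e, (e \in out v) = (src e == v)) :
  [/\
   (* phi is a well-defined endomorphism of K_0^gr *)
   (forall L1 L2, K0eq rng out L1 L2 -> K0eq rng out (phi L1) (phi L2)),
   (* phi o psi|_{Z^R} = psi o K *)
   (forall x, onR out x ->
      K0eq rng out (phi (psi x)) (psi (Kmap rng out x))),
   (* psi restricts to an isomorphism Ker K -> Ker phi *)
   [/\ (forall x, onR out x -> (forall w, coef (Kmap rng out x) w = 0) ->
          K0eq rng out (phi (psi x)) [::]),
       (forall x y, onR out x -> onR out y ->
          (forall w, coef (Kmap rng out x) w = 0) ->
          (forall w, coef (Kmap rng out y) w = 0) ->
          K0eq rng out (psi x) (psi y) -> forall w, coef x w = coef y w) &
       (forall L, K0eq rng out (phi L) [::] ->
          exists x, [/\ onR out x, (forall w, coef (Kmap rng out x) w = 0) &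
                        K0eq rng out (psi x) L])] &
   (* psi induces an isomorphism Coker K -> Coker phi *)
   [/\ (forall x y z, onR out z ->
          (forall w, coef x w = coef y w + coef (Kmap rng out z) w) ->
          exists L', K0eq rng out (psi x) (psi y ++ phi L')),
       (forall x y L', K0eq rng out (psi x) (psi y ++ phi L') ->
          exists z, onR out z /\
            forall w, coef x w = coef y w + coef (Kmap rng out z) w) &
       (forall L, exists x L', K0eq rng out L (psi x ++ phi L'))]].
Proof.
split.
- exact: part1.
- exact: part2.
- split.
  + exact: part3a.
  + by move=> x y _ _; exact: part3b.
  + exact: part3c.
- split.
  + exact: part4.
  + exact: part5.
  + exact: part6.
Qed.
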